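(* Let $G$ be a connected chordal graph with at least two vertices. A vertex $v\in V(G)$ is an $\mathcal{L}$-branch leaf of some perfect elimination ordering of $G$ if and only if $v$ is simplicial in $G$.
   Context: Graphs are finite, simple, undirected. A graph is chordal if it has no induced cycle of length at least 4. A vertex is simplicial if its neighborhood is a clique. A vertex ordering $\sigma$ of $G$ (a bijection $\{1,\dots,n\}\to V(G)$, with $u\prec_\sigma w$ meaning $u$ comes before $w$) is a perfect elimination ordering (PEO) if every vertex $v$ is simplicial in the subgraph induced by $\{w : w\prec_\sigma v\}\cup\{v\}$, i.e., the neighbors of $v$ to its left form a clique. For an ordering $\sigma$ of a connected graph in which every vertex other than $\sigma(1)$ has a neighbor to its left (as is the case for PEOs of connected chordal graphs), the $\mathcal{L}$-tree of $\sigma$ is the spanning tree containing, for each $v\neq\sigma(1)$, the edge from $v$ to its rightmost neighbor $w$ with $w\prec_\sigma v$. A vertex $v\neq\sigma(1)$ that is a leaf of the $\mathcal{L}$-tree is an $\mathcal{L}$-branch leaf of $\sigma$. *)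

(* Defs.v *)
From mathcomp Require Import all_boot.
Set Implicit Arguments. Unset Strict Implicit. Unset Printing Implicit Defensive.

Definition simple_graph (T : finType) (e : rel T) : Prop :=
  symmetric e /\ irreflexive e.

Definition connected_graph (T : finType) (e : rel T) : Prop :=
  forall x y : T, connect e x y.

Definition induced_cycle (T : finType) (e : rel T) (c : seq T) : Prop :=
  [/\ uniq c, 4 <= size c &
    forall (x0 : T) i j, i < size c -> j < size c ->
      e (nth x0 c i) (nth x0 c j) =
      (j == i.+1 %% size c) || (i == j.+1 %% size c)].

Definition chordal (T : finType) (e : rel T) : Prop :=
  forall c : seq T, ~ induced_cycle e c.

Definition simplicial (T : finType) (e : rel T) (v : T) : Prop :=
  forall x y : T, e v x -> e v y -> x != y -> e x y.

(* A vertex ordering: a sequence listing every vertex exactly once;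
   sigma(1) is the head, u precedes w iff its index is smaller. *)
Definition vertex_ordering (T : finType) (s : seq T) : Prop :=
  perm_eq s (enum T).

Definition prec (T : finType) (s : seq T) (u w : T) : bool :=
  index u s < index w s.

Definition peo (T : finType) (e : rel T) (s : seq T) : Prop :=
  vertex_ordering s /\
  forall v x y : T, prec s x v -> prec s y v -> e v x -> e v y -> x != y ->
    e x y.

Definition rightmost_left_nbr (T : finType) (e : rel T) (s : seq T) (v w : T)
  : bool :=
  [&& prec s w v, e v w &
      [forall u : T, (prec s w u && prec s u v) ==> ~~ e v u]].

Definition Ltree_edge (T : finType) (e : rel T) (s : seq T) (x y : T) : bool :=
  (rightmost_left_nbr e s x y || rightmost_left_nbr e s y x).

Definition Ltree_degree (T : finType) (e : rel T) (s : seq T) (v : T) : nat :=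
  #|[set w : T | Ltree_edge e s v w]|.

Definition Lbranch_leaf (T : finType) (e : rel T) (s : seq T) (v : T) : Prop :=
  v != head v s /\ Ltree_degree e s v = 1.

(* Main.v *)
Require Import Defs.
From mathcomp Require Import all_boot zify.
Set Implicit Arguments. Unset Strict Implicit. Unset Printing Implicit Defensive.

Section Chordal.
Variables (T : finType) (e : rel T).
Hypothesis esym : symmetric e.
Hypothesis eirr : irreflexive e.

Ltac slia := repeat (match goal with
  | H : context [@size ?A ?q] |- _ =>
     lazymatch A with Finite.sort T => fail | _ =>
       change (@size A q) with (@size (Finite.sort T) q) in H end
  | |- context [@size ?A ?q] =>
     lazymatch A with Finite.sort T => fail | _ =>
       change (@size A q) with (@size (Finite.sort T) q) end
  end); lia.

Definition walk (P : pred T) (a b : T) (q : seq T) :=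
  [/\ 0 < size q, nth a q 0 = a, nth a q (size q).-1 = b, all P q &
      forall k, k.+1 < size q -> e (nth a q k) (nth a q k.+1)].

Definition chordless (a : T) (q : seq T) :=
  forall i j, i.+1 < j -> j < size q -> ~~ e (nth a q i) (nth a q j).

Lemma walk_splice P a b q i j : walk P a b q -> 0 < i -> i <= j -> j < size q ->
  e (nth a q i.-1) (nth a q j) -> walk P a b (take i q ++ drop j q).
Proof.
move=> [s0 h0 l0 aP ed] i0 ij js E.
have szt : size (take i q) = i by rewrite size_take; case: ifP => //; slia.
have sz : size (take i q ++ drop j q) = i + (size q - j) by rewrite size_cat szt size_drop.
have nthE k : nth a (take i q ++ drop j q) k =
   if k < i then nth a q k else nth a q (j + (k - i)).
  rewrite nth_cat szt; case: ifP => ki; [by rewrite nth_take | by rewrite nth_drop].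
split.
- by rewrite sz; slia.
- by rewrite nthE i0.
- rewrite sz nthE; case: ifP => [|_]; first slia.
  by rewrite -l0; congr nth; slia.
- apply/allP => x; rewrite mem_cat => /orP [/mem_take|/mem_drop] xq; exact: (allP aP).
- move=> k; rewrite sz => kk; rewrite !nthE.
  case: (ltnP k.+1 i) => k1.
  + rewrite (ltnW k1); apply: ed; slia.
  + case: (ltnP k i) => k2.
    * have -> : k = i.-1 by slia.
      by have -> : j + (i.-1.+1 - i) = j by slia.
    * have -> : j + (k.+1 - i) = (j + (k - i)).+1 by slia.
      apply: ed; slia.
Qed.

Lemma walk_drop P a b q j : walk P a b q -> j < size q -> nth a q j = a ->
  walk P a b (drop j q).
Proof.
move=> [s0 h0 l0 aP ed] js E; split.
- rewrite size_drop; slia.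
- by rewrite nth_drop addn0.
- rewrite nth_drop size_drop -l0; congr nth; slia.
- apply/allP => x /mem_drop xq; exact: (allP aP).
- move=> k; rewrite size_drop => kk; rewrite !nth_drop.
  have -> : j + k.+1 = (j + k).+1 by slia.
  apply: ed; slia.
Qed.

Lemma walk_min P a b q : walk P a b q ->
  exists q', [/\ walk P a b q', uniq q' & chordless a q'].
Proof.
have [n] := ubnP (size q); elim: n q => // n IH q Hn Hw.
case Hu: (uniq q); last first.
  move/negbT: Hu => /(uniqPn a) [i [j [ij js E]]].
  case: i ij E => [|i] ij E.
    apply: (IH (drop j q)).
      rewrite size_drop. slia.
    apply: walk_drop => //; rewrite -E; by case: Hw.
  apply: (IH (take i.+1 q ++ drop j q)).
    rewrite size_cat size_takel ?size_drop; slia.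
  apply: walk_splice => //; first slia.
  rewrite -E /=; case: Hw => _ _ _ _ ed; apply: ed; slia.
case Hc: [forall i : 'I_(size q), forall j : 'I_(size q),
            (i.+1 < j) ==> ~~ e (nth a q i) (nth a q j)].
  exists q; split => // i j ij js.
  have iq : i < size q by slia.
  by move/forallP: Hc => /(_ (Ordinal iq)) /forallP /(_ (Ordinal js)) /implyP /(_ ij).
move/negbT: Hc => /forallPn [i /forallPn [j]]; rewrite negb_imply negbK => /andP [ij E].
have ii := ltn_ord i; have jj := ltn_ord j.
apply: (IH (take i.+1 q ++ drop j q)).
  rewrite size_cat size_takel ?size_drop; slia.
apply: walk_splice => //; slia.
Qed.

Lemma path_walk P a p : path e a p -> all P (a :: p) -> walk P a (last a p) (a :: p).
Proof.
move=> pth aP; split => //.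
- by rewrite nth_last.
- move=> k kk; move/(pathP a): pth => /(_ k); apply; by [].
Qed.

Lemma modS k n : k <= n -> k.+1 %% n.+1 = if k == n then 0 else k.+1.
Proof. move=> kn; case: eqP => [->|ne]; first by rewrite modnn.
by rewrite modn_small; lia. Qed.

Lemma mk_cycle u q a : uniq q -> 3 <= size q -> chordless a q ->
  (forall k, k.+1 < size q -> e (nth a q k) (nth a q k.+1)) ->
  u \notin q -> (forall k, k < size q -> e u (nth a q k) = (k == 0) || (k == (size q).-1)) ->
  induced_cycle e (u :: q).
Proof.
move=> uq s3 cl ed nu eu; split => //=; first by rewrite nu uq.
have Hm0 : 1 %% (size q).+1 = 1 by rewrite modn_small //; slia.
move=> x0 [|i] [|j] /= Hi Hj.
- by rewrite eirr Hm0.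
- rewrite (set_nth_default a) ?eu; try slia.
  rewrite Hm0 (modS (k := j.+1)); last slia.
  case: ifP => ?; slia.
- rewrite esym (set_nth_default a) ?eu; try slia.
  rewrite Hm0 (modS (k := i.+1)); last slia.
  case: ifP => ?; slia.
- rewrite !(set_nth_default a x0); try slia.
  have -> : e (nth a q i) (nth a q j) = (j == i.+1) || (i == j.+1).
    case: (ltngtP i j) => [ij|ji|->].
    + case: (eqVneq j i.+1) => [->|ne]; first by rewrite ed ?eqxx //; slia.
      rewrite (negbTE (cl i j _ _)); slia.
    + case: (eqVneq i j.+1) => [->|ne]; first by rewrite esym ed ?eqxx ?orbT //; slia.
      rewrite esym (negbTE (cl j i _ _)); slia.
    + by rewrite eirr; slia.
  rewrite (modS (k := i.+1)) ?(modS (k := j.+1)); try slia.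
  do 2 (case: ifP => ?); slia.
Qed.

Hypothesis ech : chordal e.

Definition clique (K : {set T}) := forall x y, x \in K -> y \in K -> x != y -> e x y.
Definition simpl_in (H : {set T}) x :=
  forall y z, y \in H -> z \in H -> e x y -> e x z -> y != z -> e y z.

Lemma path_D (D : {set T}) x p :
  path [rel a b | [&& a \in D, b \in D & e a b]] x p -> all (mem D) p.
Proof.
elim: p x => //= y p IH x /andP [/and3P [_ yD _] pth].
by rewrite yD (IH y).
Qed.

Lemma key n : forall H K : {set T}, #|H| < n -> K \subset H -> clique K ->
  (exists x, (x \in H) && (x \notin K)) ->
  exists x, [/\ x \in H, x \notin K & simpl_in H x].
Proof.
elim: n => // n IH H K Hn KH cK [x0 /andP [x0H x0K]].
case: (boolP [forall y, forall z, [&& y \in H, z \in H & y != z] ==> e y z]) => Hcl.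
  exists x0; split => // y z yH zH _ _ yz.
  by move/forallP: Hcl => /(_ y) /forallP /(_ z) /implyP; apply; rewrite yH zH.
move/forallPn: Hcl => [y0 /forallPn [z0]]; rewrite negb_imply => /andP [/and3P [y0H z0H yz0] nyz0].
have [u [uH HK [y /and3P [yH yu nuy]]]] : exists u, [/\ u \in H,
    (forall k, k \in K -> (k == u) || e u k) &
    exists y, [&& y \in H, y != u & ~~ e u y]].
  case: (boolP [exists k in K, exists w in H, (w != k) && ~~ e k w]).
    move/exists_inP => [k kK /exists_inP [w wH /andP [wk nkw]]].
    exists k; split; first exact: (subsetP KH).
      move=> k' k'K; case: eqP => //= /eqP kk; apply: cK => //; by rewrite eq_sym.
    by exists w; rewrite wH wk.
  move/exists_inPn => nex; exists y0; split => //.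
    move=> k kK; case: eqP => //= /eqP ky; apply/negPn/negP => nyk.
    move: (nex k kK) => /exists_inPn /(_ y0 y0H); rewrite eq_sym ky esym nyk.
    by [].
  by exists z0; rewrite z0H eq_sym yz0.
set D := [set w in H | (w != u) && ~~ e u w].
set r := [rel a b | [&& a \in D, b \in D & e a b]].
set C := [set w in D | connect r y w].
set N := [set s in H | e u s && [exists c in C, e s c]].
have yD : y \in D by rewrite inE yH yu.
have yC : y \in C by rewrite inE yD connect0.
have CD w : w \in C -> w \in D by rewrite inE => /andP [].
have uCN : u \notin C :|: N.
  rewrite !inE eqxx /= eirr /=; by rewrite !andbF.
have CNH : C :|: N \subset H.
  apply/subsetP => w; rewrite !inE => /orP [/andP [/andP [] //]|/andP [] //].
have card : #|C :|: N| < n.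
  have : C :|: N \proper H by apply/properP; split => //; exists u.
  by move/proper_card => h; apply: leq_trans h _; rewrite -ltnS.
have cN : clique N.
  move=> s t sN tN st.
  move: sN; rewrite inE => /andP [sH /andP [us /exists_inP [c1 c1C sc1]]].
  move: tN; rewrite inE => /andP [tH /andP [ut /exists_inP [c2 c2C tc2]]].
  case est: (e s t) => //; exfalso.
  have c1y : connect r y c1 by move: c1C; rewrite inE => /andP [].
  have c2y : connect r y c2 by move: c2C; rewrite inE => /andP [].
  have symr : symmetric r by move=> a b; rewrite /= esym andbCA.
  have c12 : connect r c1 c2.
    apply: (connect_trans (y := y)); last exact: c2y.
    by rewrite (sym_connect_sym symr).
  move/connectP: c12 => [p pth c2E].
  have pC : all (mem C) (c1 :: p).
    apply/allP => w wp; rewrite inE.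
    have c1w := path_connect pth wp.
    suff : (w \in D) && connect r y w by rewrite [w \in C]inE.
    apply/andP; split; last exact: connect_trans c1y c1w.
    move: wp; rewrite inE => /orP [/eqP -> | wp]; first exact: CD.
    exact: (allP (path_D pth)).
  have pe : path e c1 p by apply: sub_path pth => a b /and3P [].
  pose P := [pred w | (w \in C) || (w == s) || (w == t)].
  have pth' : path e s (c1 :: rcons p t).
    by rewrite /= sc1 rcons_path pe -c2E esym tc2.
  have aP' : all P (s :: c1 :: rcons p t).
    apply/allP => w; rewrite inE => /orP [/eqP->|]; first by rewrite /= eqxx orbT.
    rewrite inE mem_rcons inE => /orP [/eqP->|]; first by rewrite /= c1C.
    rewrite inE => /orP [/eqP->|wp]; first by rewrite /= eqxx !orbT.
    move: (allP pC w); rewrite inE wp orbT => /(_ isT) wC.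
    by rewrite /=; apply/orP; left; apply/orP; left; exact: wC.
  have w0 := @path_walk P s (c1 :: rcons p t) pth' aP'.
  have lt : last s (c1 :: rcons p t) = t by rewrite /= last_rcons.
  rewrite lt in w0.
  have [q [[q0 h0 l0 aP ed] uq clq]] := walk_min w0.
  have sq3 : 3 <= size q.
    move: ed l0; case Hs: (size q) => [|[|[|k]]] //= ed l0.
    - by rewrite Hs in q0.
    - by move: st; rewrite -h0 -l0 eqxx.
    - by move: (ed 0 (isT)); rewrite h0 l0 est.
  apply: (ech (c := u :: q)); apply: (mk_cycle (a := s)) => //.
    have uC : u \notin C by move: uCN; rewrite in_setU negb_or => /andP [].
    have us' : (u == s) = false by apply/negbTE/eqP => eus; move: us; rewrite -eus eirr.
    have ut' : (u == t) = false by apply/negbTE/eqP => eus; move: ut; rewrite -eus eirr.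
    apply/negP => uq'; move: (allP aP u uq'); rewrite /= us' ut' !orbF; exact/negP.
  move=> k kq; case: (eqVneq k 0) => [->|k0]; first by rewrite h0 us.
  case: (eqVneq k (size q).-1) => [->|kl]; first by rewrite l0 ut orbT.
  rewrite orbF.
  have ks : (nth s q k == s) = false.
    by rewrite -[X in _ == X]h0 nth_uniq // (negbTE k0).
  have kt : (nth s q k == t) = false.
    by rewrite -[X in _ == X]l0 nth_uniq ?ltn_predL // (negbTE kl).
  move: (allP aP _ (mem_nth s kq)); rewrite /= ks kt !orbF => /CD.
  by rewrite inE => /and3P [_ _ /negbTE].
have [|x [xCN xN sx]] := IH (C :|: N) N card (subsetUr _ _) cN.
  by exists y; rewrite in_setU yC /= inE (negbTE nuy) /= andbF.
have xC : x \in C by move: xCN; rewrite inE (negbTE xN) orbF.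
have xD := CD x xC.
move: (xD); rewrite inE => /and3P [xH xu nux].
have nbr w : w \in H -> e x w -> w \in C :|: N.
  move=> wH xw; case: (eqVneq w u) => [wu|wu].
    by move: nux; rewrite -wu esym xw.
  case euw: (e u w).
    rewrite !inE wH euw /=; apply/orP; right; apply/exists_inP; exists x => //.
    by rewrite esym.
  have wD : w \in D by rewrite inE wH wu euw.
  rewrite inE; apply/orP; left; rewrite inE wD /=.
  apply: (connect_trans (y := x)); first by move: xC; rewrite inE => /andP [].
  by apply: connect1; rewrite /= xD wD xw.
exists x; split => //.
  by apply/negP => /HK; rewrite (negbTE xu) (negbTE nux).
move=> a b aH bH xa xb ab; apply: (sx a b) => //; exact: nbr.
Qed.

Definition pcond (s : seq T) := forall v x y, v \in s -> prec s x v -> prec s y v ->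
  e v x -> e v y -> x != y -> e x y.

Lemma pset_rcons (A : {set T}) s z : z \in A -> uniq s ->
  (forall x, (x \in s) = (x \in A :\ z)) -> pcond s ->
  (forall x y, x \in A -> y \in A -> e z x -> e z y -> x != y -> e x y) ->
  [/\ uniq (rcons s z), forall x, (x \in rcons s z) = (x \in A) & pcond (rcons s z)].
Proof.
move=> zA us ms pc zs.
have zns : z \notin s by rewrite ms !inE eqxx.
have idx w : index w (rcons s z) = if w \in s then index w s else size s + (z != w).
  by rewrite -cats1 index_cat /=; case: (w \in s) => //; case: (z == w).
split.
- by rewrite rcons_uniq zns us.
- move=> x; rewrite mem_rcons inE ms !inE; case: eqP => [->|] //=.
- move=> v x y; rewrite /prec !idx mem_rcons inE => vs.
  have fin w : w \in s -> index w s < size s by rewrite index_mem.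
  case: (boolP (v \in s)) => vs'.
  + have := fin v vs'.
    case: (boolP (x \in s)) => xs; last by move=> h1 h2; exfalso; lia.
    case: (boolP (y \in s)) => ys; last by move=> h1 _ h2; exfalso; lia.
    move=> _; exact: pc.
  + move: vs; rewrite (negbTE vs') orbF => /eqP ->; rewrite eqxx /= addn0.
    case: (boolP (x \in s)) => xs; last by move=> h1; exfalso; lia.
    case: (boolP (y \in s)) => ys; last by move=> _ h1; exfalso; lia.
    move=> _ _; apply: zs.
    * by move: xs; rewrite ms inE => /andP [].
    * by move: ys; rewrite ms inE => /andP [].
Qed.

Lemma pset_exists n : forall A : {set T}, #|A| < n ->
  exists s, [/\ uniq s, forall x, (x \in s) = (x \in A) & pcond s].
Proof.
elim: n => // n IH A An.
case: (set_0Vmem A) => [->|[z zA]].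
  by exists [::]; split => // x; rewrite inE.
have c0 : clique set0 by move=> x y; rewrite inE.
have ex0 : exists x, (x \in A) && (x \notin set0) by exists z; rewrite zA inE.
have [z' [z'A _ sz]] := key (ltnSn #|A|) (sub0set A) c0 ex0.
have Az : #|A :\ z'| < n by move: An; rewrite (cardsD1 z') z'A add1n ltnS.
have [s [us ms pc]] := IH (A :\ z') Az.
by exists (rcons s z'); apply: pset_rcons.
Qed.

Lemma idx_inj (s : seq T) : (forall z, z \in s) -> forall a b, index a s = index b s -> a = b.
Proof. by move=> alls a b E; rewrite -(nth_index a (alls a)) E nth_index. Qed.

Lemma prec_tot (s : seq T) : (forall z, z \in s) -> forall a b, a != b -> prec s a b || prec s b a.
Proof.
move=> alls a b ab; rewrite /prec; case: ltngtP => // /(idx_inj alls) E.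
by rewrite E eqxx in ab.
Qed.

Lemma left_nbr (s : seq T) x : (forall z, z \in s) -> uniq s -> pcond s -> connected_graph e ->
  x != head x s -> exists z, e x z && prec s z x.
Proof.
move=> alls us pc conn xh.
have tot := prec_tot alls.
move/connectP: (conn x (head x s)) => [p pth hE].
have aP : all predT (x :: p) by apply/allP.
have := path_walk pth aP; rewrite -hE => w0.
have [q [[q0 h0 l0 _ ed] uq clq]] := walk_min w0.
have sq : 1 < size q.
  move: l0; case Hs: (size q) => [|[|k]] //= l0.
  - by rewrite Hs in q0.
  - by move: xh; rewrite -l0 h0 eqxx.
case: (boolP [exists z, e x z && prec s z x]) => [/existsP //|/existsPn nz].
exfalso.
have inc : forall k, k.+1 < size q -> prec s (nth x q k) (nth x q k.+1).
  elim => [|k IHk] kq.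
  - have e01 := ed 0 kq; rewrite h0 in e01.
    have np := nz (nth x q 1); rewrite e01 /= in np.
    have ne : x != nth x q 1 by apply/eqP => E; move: e01; rewrite -E eirr.
    by move: (tot _ _ ne); rewrite (negbTE np) orbF h0.
  - have IH' := IHk (ltnW kq).
    have e12 := ed k.+1 kq.
    case: (boolP (prec s (nth x q k.+1) (nth x q k.+2))) => // np; exfalso.
    have ne : nth x q k.+1 != nth x q k.+2 by apply/eqP => E; move: e12; rewrite E eirr.
    move: (tot _ _ ne); rewrite (negbTE np) /= => p21.
    have ne02 : nth x q k != nth x q k.+2.
      by rewrite nth_uniq // ?(ltn_eqF (leqnSn k.+1)) // (ltnW (ltnW kq)).
    have e10 : e (nth x q k.+1) (nth x q k) by rewrite esym; apply: ed; exact: ltnW.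
    have := pc _ _ _ (alls _) IH' p21 e10 e12 ne02.
    by rewrite (negbTE (clq k k.+2 (ltnSn _) kq)).
have gt : forall k, 0 < k -> k < size q -> index x s < index (nth x q k) s.
  elim => // k IHk _ kq; case: k IHk kq => [|k] IHk kq.
  - by have := inc 0 kq; rewrite h0.
  - exact: ltn_trans (IHk isT (ltnW kq)) (inc k.+1 kq).
have := gt (size q).-1; rewrite l0 ltn_predL (leq_trans _ sq) // -ltnS prednK ?(ltnW sq) //.
move=> /(_ sq isT).
case E: s alls => [|a s'] alls'; first by move: (alls' x).
by rewrite /= eqxx.
Qed.

End Chordal.

Theorem theorem9 (T : finType) (e : rel T) :
  simple_graph e -> connected_graph e -> chordal e -> 2 <= #|T| ->
  forall v : T,
    (exists s : seq T, peo e s /\ Lbranch_leaf e s v) <-> simplicial e v.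
Proof.
move=> [esym eirr] conn ech T2 v; split.
- move=> [s [[vo pc] [vh deg]]].
  have alls z : z \in s by rewrite (perm_mem vo) mem_enum.
  have us : uniq s by rewrite (perm_uniq vo) enum_uniq.
  have pc' : pcond e s by move=> v' x y _; apply: pc.
  have tot := prec_tot alls.
  have [z0 vz0] := left_nbr esym eirr alls us pc' conn vh.
  set w0 := [arg max_(w > z0 | e v w && prec s w v) index w s].
  have [w0P w0max] : (e v w0 && prec s w0 v) /\
      forall w, e v w && prec s w v -> index w s <= index w0 s.
    by rewrite /w0; case: (@arg_maxnP _ z0 (fun w => e v w && prec s w v) (fun w => index w s) vz0).
  have rml_v : rightmost_left_nbr e s v w0.
    move: w0P => /andP [vw0 w0v]; rewrite /rightmost_left_nbr w0v vw0 /=.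
    apply/forallP => u; apply/implyP => /andP [w0u uv]; apply/negP => vu.
    by have := w0max u; rewrite vu uv /= => /(_ isT); rewrite leqNgt; move: w0u; rewrite /prec => ->.
  have noright : forall u, e v u -> prec s u v.
    move=> u vu; case: (boolP (prec s u v)) => // nuv; exfalso.
    have uv : prec s v u.
      have ne : v != u by apply/eqP => E; move: vu; rewrite E eirr.
      by move: (tot _ _ ne); rewrite (negbTE nuv) orbF.
    have vuP : e v u && prec s v u by rewrite vu uv.
    set u0 := [arg min_(w < u | e v w && prec s v w) index w s].
    have [u0P u0min] : (e v u0 && prec s v u0) /\
        forall w, e v w && prec s v w -> index u0 s <= index w s.
      by rewrite /u0; case: (@arg_minnP _ u (fun w => e v w && prec s v w) (fun w => index w s) vuP).
    have rml_u : rightmost_left_nbr e s u0 v.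
      move: u0P => /andP [vu0 vpu0]; rewrite /rightmost_left_nbr vpu0 (esym u0 v) vu0 /=.
      apply/forallP => w; apply/implyP => /andP [vw wu0]; apply/negP => u0w.
      have vw' : e v w.
        apply: (pc u0 v w) => //; first by rewrite esym.
        by apply/eqP => E; move: vw; rewrite E /prec ltnn.
      by have := u0min w; rewrite vw' vw => /(_ isT); rewrite leqNgt; move: wu0; rewrite /prec => ->.
    have : #|[set w0; u0]| <= Ltree_degree e s v.
      apply: subset_leq_card; apply/subsetP => w; rewrite !inE => /orP [/eqP->|/eqP->].
      + by rewrite /Ltree_edge rml_v.
      + by rewrite /Ltree_edge rml_u orbT.
    have ne : w0 != u0.
      apply/eqP => E; move: w0P u0P; rewrite E => /andP [_ h1] /andP [_ h2].
      by move: (ltn_trans h1 h2); rewrite ltnn.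
    by rewrite deg cards2 ne.
  move=> x y vx vy xy; apply: (pc v x y) => //; exact: noright.
- move=> sv.
  have [s' [us' ms' pc']] := pset_exists esym eirr ech (n := #|[set~ v]|.+1) (ltnSn _).
  have [us ms pc] := @pset_rcons T e [set: T] s' v (in_setT v) us'
     (fun x => ltac:(by rewrite ms' !inE andbT)) pc' (fun x y _ _ => sv x y).
  set s := rcons s' v.
  have alls z : z \in s by rewrite ms inE.
  exists s; split.
    split; first by apply: uniq_perm => //; [exact: enum_uniq | move=> x; rewrite ms mem_enum inE].
    move=> v' x y; apply: pc; by rewrite ms inE.
  have [w] : exists w, w \in [set~ v].
    apply/set0Pn; rewrite -card_gt0 cardsC1; lia.
  rewrite !inE => wv.
  have vs' : v \notin s' by rewrite ms' !inE eqxx.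
  have idxv : index v s = size s' by rewrite /s -cats1 index_cat (negbTE vs') /= eqxx addn0.
  have idxo y : y != v -> index y s < size s'.
    move=> yv; rewrite /s -cats1 index_cat.
    have ys : y \in s' by rewrite ms' !inE yv.
    by rewrite ys index_mem.
  have notprec y : ~~ prec s v y.
    rewrite /prec idxv; case: (eqVneq y v) => [->|yv]; first by rewrite idxv ltnn.
    by rewrite -leqNgt ltnW // idxo.
  have hd : v != head v s.
    rewrite /s; case E: s' ms' => [|a s''] ms'2; first by move: (ms'2 w); rewrite !inE wv.
    by have := ms'2 a; rewrite mem_head !inE /= => H; rewrite eq_sym -H.
  move/connectP: (conn v w) => [[|z p] pth wE]; first by move: wv; rewrite wE eqxx.
  move: pth => /= /andP [vz _].
  set w0 := [arg max_(w > z | e v w) index w s].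
  have [w0P w0max] : e v w0 /\ forall w, e v w -> index w s <= index w0 s.
    by rewrite /w0; case: (@arg_maxnP _ z (fun w => e v w) (fun w => index w s) vz).
  have w0v : w0 != v by apply/eqP => E; move: w0P; rewrite E eirr.
  have rml_v : rightmost_left_nbr e s v w0.
    rewrite /rightmost_left_nbr /prec idxv idxo // w0P /=.
    apply/forallP => u; apply/implyP => /andP [w0u uv]; apply/negP => vu.
    by have := w0max u vu; rewrite leqNgt; move: w0u; rewrite /prec => ->.
  have seteq : [set w | Ltree_edge e s v w] = [set w0].
    apply/setP => x; rewrite !inE /Ltree_edge.
    have -> : rightmost_left_nbr e s x v = false by rewrite /rightmost_left_nbr (negbTE (notprec x)).
    rewrite orbF; apply/idP/eqP => [|->//].
    move/and3P => [xv vx /forallP H]; apply: (idx_inj alls).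
    apply/eqP; rewrite eqn_leq w0max //=; rewrite leqNgt; apply/negP => xw0.
    have := H w0; rewrite /prec xw0 /=.
    move: rml_v => /and3P [h1 h2 _]; move: h1; rewrite /prec => ->.
    by rewrite w0P.
  by split => //; rewrite /Ltree_degree seteq cards1.
Qed.
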